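(* Let $(X,\mathcal{F})$ be a measurable lamination admitting a regular foliated measurable atlas, and let $h:T\to T'$ be a measurable holonomy map between transversals. Then there exists a measurable homotopy $H:T\times\mathbb{R}\to X$ such that $H(t,0)=t$ and $H(t,1)=h(t)$ for all $t\in T$.
   Context: Measurable lamination: an MT-space (set with $\sigma$-algebra and topology) covered by countably many measurable open sets with MT-isomorphisms onto $B\times T$, $B$ an open ball in $\mathbb{R}^n$, $T$ standard Borel (product of Euclidean and discrete topologies, product $\sigma$-algebra); leaves are connected components. A foliated measurable atlas is regular if each chart $(U,\varphi)$ is the restriction of a chart $(W,\psi)$ with $\overline U\subset W$ and plaques of $U$ having compact closure, and each plaque of a chart meets at most one plaque of any other chart. A transversal is a measurable set meeting each leaf countably; a measurable holonomy map is a measurable isomorphism $h:T\to T'$ between transversals with $h(t)$ in the leaf of $t$. A measurable homotopy $T\times\mathbb{R}\to X$ is an MT-map (measurable, continuous) where $T\times\mathbb{R}$ has the topology of $\mathbb{R}$ on each $\{t\}\times\mathbb{R}$ and $T$ discrete. *)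

(* Defs.v *)
From HB Require Import structures.
From mathcomp Require Import all_boot all_order all_algebra.
From mathcomp Require Import all_classical all_reals all_analysis.
From mathcomp Require Import Rstruct Rstruct_topology.

Set Implicit Arguments.
Unset Strict Implicit.
Unset Printing Implicit Defensive.
Import Order.TTheory GRing.Theory Num.Theory.
Local Open Scope classical_set_scope.
Local Open Scope ring_scope.

Notation R := Rdefinitions.R.

Notation Rn n := 'rV[R]_n.

Definition eball (n : nat) (c : Rn n) (r : R) : set (Rn n) :=
  [set x | \sum_(i < n) (x ord0 i - c ord0 i) ^+ 2 < r ^+ 2].

Definition eopen (n : nat) (W : set (Rn n)) : Prop :=
  forall x, W x -> exists2 e : R, 0 < e & eball x e `<=` W.

Definition borel (Z : topologicalType) : set (set Z) := <<s [set A | open A] >>.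

Definition borelRn (n : nat) : set (set (Rn n)) := <<s [set A | eopen A] >>.

(** Topology on R^n x T where T carries the discrete topology:
    a set is open iff each horizontal slice is open in R^n. *)
Definition EDopen (n : nat) (W : set (Rn n * R)) : Prop :=
  forall t : R, eopen [set x | W (x, t)].

Definition EDmeas (n : nat) : set (set (Rn n * R)) :=
  <<s [set A `*` C | A in @borelRn n & C in @borel R] >>.

Definition MT_iso (X : topologicalType) (measX : set (set X)) (Z : Type)
    (openZ measZ : set (set Z)) (U : set X) (A : set Z) (f : X -> Z) : Prop :=
  [/\ set_bij U A f,
      (forall W, W `<=` A -> (openZ W <-> open (U `&` f @^-1` W))) &
      (forall W, W `<=` A -> (measZ W <-> measX (U `&` f @^-1` W)))].

(** Standard Borel spaces are (by Kuratowski) exactly the measurable spaces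
    Borel-isomorphic to a Borel subset of R; so a chart onto B x T with T
    standard Borel is encoded as a chart onto B x S with S a Borel subset of R
    (T carrying the discrete topology). *)
Definition MT_chart (X : topologicalType) (measX : set (set X)) (n : nat)
    (U : set X) (phi : X -> Rn n * R) : Prop :=
  [/\ open U, measX U &
      exists (c : Rn n) (r : R) (S : set R),
        [/\ 0 < r, borel S &
            MT_iso measX (@EDopen n) (@EDmeas n) U (eball c r `*` S) phi]].

Definition plaque (X : Type) (n : nat) (U : set X) (phi : X -> Rn n * R)
    (P : set X) : Prop :=
  exists2 x, U x & P = [set y | U y /\ (phi y).2 = (phi x).2].

Definition fol_meas_atlas (X : topologicalType) (measX : set (set X)) (n : nat)
    (At : set (set X * (X -> Rn n * R))) : Prop :=
  [/\ countable At,
      (forall c, At c -> MT_chart measX c.1 c.2) &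
      (forall x : X, exists2 c, At c & c.1 x)].

Definition regular_atlas (X : topologicalType) (measX : set (set X)) (n : nat)
    (At : set (set X * (X -> Rn n * R))) : Prop :=
  fol_meas_atlas measX At /\
  forall c, At c ->
    [/\ (exists (W : set X) (psi : X -> Rn n * R),
           [/\ MT_chart measX W psi, closure c.1 `<=` W &
               forall x, c.1 x -> c.2 x = psi x]),
        (forall P, plaque c.1 c.2 P -> compact (closure P)) &
        (forall c', At c' -> forall P P1 P2, plaque c.1 c.2 P ->
           plaque c'.1 c'.2 P1 -> plaque c'.1 c'.2 P2 ->
           P `&` P1 !=set0 -> P `&` P2 !=set0 -> P1 = P2)].

Definition meas_lamination (X : topologicalType) (measX : set (set X)) (n : nat) : Prop :=
  sigma_algebra setT measX /\ exists At, @fol_meas_atlas X measX n At.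

Definition leaf (X : topologicalType) (x : X) : set X := connected_component setT x.

Definition transversal (X : topologicalType) (measX : set (set X)) (T : set X) : Prop :=
  measX T /\ forall x : X, countable (T `&` leaf x).

Definition meas_holonomy (X : topologicalType) (measX : set (set X))
    (T T' : set X) (h : X -> X) : Prop :=
  [/\ transversal measX T, transversal measX T',
      set_bij T T' h,
      (forall A, A `<=` T' -> (measX A <-> measX (T `&` h @^-1` A))) &
      (forall t, T t -> leaf t (h t))].

Definition XRmeas (X : topologicalType) (measX : set (set X)) : set (set (X * R)) :=
  <<s [set A `*` C | A in measX & C in @borel R] >>.

(** Measurable homotopy T x R -> X: an MT-map, where T x R has the trace of the
    product sigma-algebra and the topology (T discrete) x (R usual). *)
Definition meas_homotopy (X : topologicalType) (measX : set (set X))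
    (T : set X) (H : X * R -> X) : Prop :=
  (forall t, T t -> continuous (fun s : R => H (t, s))) /\
  (forall A, measX A -> XRmeas measX ((T `*` setT) `&` H @^-1` A)).

(* Main.v *)
Require Import Defs.
From mathcomp Require Import all_boot all_order all_algebra.
From mathcomp Require Import all_classical all_reals all_analysis.
From mathcomp Require Import Rstruct Rstruct_topology.
From mathcomp Require Import lra ring.
Import Order.TTheory GRing.Theory Num.Theory.
Local Open Scope classical_set_scope.
Local Open Scope ring_scope.
Set Implicit Arguments.
Unset Strict Implicit.
Unset Printing Implicit Defensive.


Section SigmaFacts.
Context {T : Type} (M : set (set T)) (HM : sigma_algebra setT M).

Lemma s0 : M set0. Proof. by case: HM. Qed.
Lemma sC A : M A -> M (~` A).
Proof. by case: HM => _ h _ /h; rewrite setTD. Qed.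
Lemma sT : M setT.
Proof. by rewrite -setC0; apply: sC; apply: s0. Qed.
Lemma sbigU (F : nat -> set T) : (forall k, M (F k)) -> M (\bigcup_k F k).
Proof. by case: HM => _ _; apply. Qed.
Lemma sU A B : M A -> M B -> M (A `|` B).
Proof.
move=> hA hB.
have -> : A `|` B = \bigcup_k (if k is 0%N then A else B).
  apply/seteqP; split=> x.
    by case=> h; [exists 0%N | exists 1%N].
  by case=> -[|k] _ h; [left|right].
by apply: sbigU => -[|k].
Qed.
Lemma sI A B : M A -> M B -> M (A `&` B).
Proof.
move=> hA hB; rewrite -[A `&` B]setCK setCI; apply: sC; apply: sU; exact: sC.
Qed.
Lemma sD A B : M A -> M B -> M (A `\` B).
Proof. by move=> hA hB; rewrite setDE; apply: sI => //; apply: sC. Qed.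
Lemma sbigI (F : nat -> set T) : (forall k, M (F k)) -> M (\bigcap_k F k).
Proof.
move=> hF; rewrite -[X in M X]setCK setC_bigcap; apply: sC; apply: sbigU => k.
exact: sC.
Qed.
Lemma sbigU_count (Q : countType) (F : Q -> set T) :
  (forall q, M (F q)) -> M (\bigcup_q F q).
Proof.
move=> hF.
have -> : \bigcup_q F q = \bigcup_k (oapp F set0 (unpickle k)).
  apply/seteqP; split=> x.
    by case=> q _ h; exists (pickle q) => //=; rewrite pickleK.
  by case=> k _ /=; case: (unpickle k) => //= q h; exists q.
by apply: sbigU => k; case: (unpickle k) => //=; apply: s0.
Qed.
Lemma sbigI_count (Q : countType) (F : Q -> set T) :
  (forall q, M (F q)) -> M (\bigcap_q F q).
Proof.
move=> hF; rewrite -[X in M X]setCK setC_bigcap; apply: sC; apply: sbigU_count => k.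
exact: sC.
Qed.
Lemma sprop (P : Prop) A : M A -> M [set x | A x /\ P].
Proof.
move=> hA; case: (pselect P) => hP.
  by have -> : [set x | A x /\ P] = A by apply/seteqP; split=> x //; case.
have -> : [set x | A x /\ P] = set0 by apply/seteqP; split=> x //; case.
exact: s0.
Qed.
End SigmaFacts.

Lemma gen_sigma {T : Type} (G : set (set T)) : sigma_algebra setT <<s G >>.
Proof. exact: smallest_sigma_algebra. Qed.

Lemma gen_sub {T : Type} (G : set (set T)) A : G A -> <<s G >> A.
Proof. by move=> h; apply: sub_gen_smallest. Qed.

Definition mfn {A B : Type} (mA : set (set A)) (mB : set (set B)) (D : set A)
  (f : A -> B) := forall b, mB b -> mA (D `&` f @^-1` b).

Lemma mfn_gen {A B : Type} (mA : set (set A)) (G : set (set B)) D (f : A -> B) :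
  sigma_algebra setT mA -> mA D ->
  (forall g, G g -> mA (D `&` f @^-1` g)) -> mfn mA <<s G >> D f.
Proof.
move=> HA hD hG b hb.
suff : [set b | mA (D `&` f @^-1` b)] b by [].
apply: (smallest_sub _ _ hb) => //.
split => /=.
- by rewrite preimage_set0 setI0; apply: s0.
- move=> X hX; rewrite setTD preimage_setC.
  have -> : D `&` ~` (f @^-1` X) = D `\` (D `&` f @^-1` X).
    by apply/seteqP; split=> x /=; [case=> h1 h2; split=> // -[]|case=> h1 h2; split => // h3; apply: h2].
  exact: sD.
- move=> F hF; rewrite preimage_bigcup setI_bigcupr; exact: sbigU.
Qed.

Lemma openR_delta (A : set R) :
  (forall x, A x -> exists2 e : R, 0 < e & forall y, `|y - x| < e -> A y) -> open A.
Proof.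
move=> HA; rewrite openE => x Ax.
have [e e0 He] := HA x Ax.
rewrite /interior; apply/nbhs_ballP; exists e => //= y.
rewrite /ball /= => hy; apply: He; by rewrite distrC.
Qed.
Lemma openR_deltaP (A : set R) : open A ->
  forall x, A x -> exists2 e : R, 0 < e & forall y, `|y - x| < e -> A y.
Proof.
rewrite openE => HA x Ax.
have := HA x Ax; rewrite /interior => /nbhs_ballP [e e0 He]; exists e => // y hy.
apply: He; rewrite /ball /= distrC //.
Qed.

Lemma open_pre_delta (f : R -> R) :
  (forall x e, 0 < e -> exists2 d : R, 0 < d & forall y, `|y - x| < d -> `|f y - f x| < e) ->
  forall A, open A -> open (f @^-1` A).
Proof.
move=> hf A oA; apply: openR_delta => x /= Ax.
have [e e0 he] := openR_deltaP oA Ax.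
have [d d0 hd] := hf x e e0.
by exists d => // y /hd /he.
Qed.

Definition clamp (s : R) : R := Num.min 1 (Num.max 0 s).

Lemma clampE s : clamp s = if s <= 0 then 0 else if 1 <= s then 1 else s.
Proof.
rewrite /clamp maxEle minEle.
case: (leP 0 s) => h0; case: (leP s 0) => h1; case: (leP 1 s) => h2;
  try (case: (leP 1 0)); try (case: (leP 1 s)); move=> //= *; lra.
Qed.

Lemma clamp_ge0 s : 0 <= clamp s.
Proof. rewrite clampE; case: (leP s 0) => ? //; case: (leP 1 s) => ? //; lra. Qed.
Lemma clamp_le1 s : clamp s <= 1.
Proof. rewrite clampE; case: (leP s 0) => ? //; case: (leP 1 s) => ? //; lra. Qed.
Lemma clamp_id s : 0 <= s -> s <= 1 -> clamp s = s.
Proof. rewrite clampE => h1 h2; case: (leP s 0) => ? //; case: (leP 1 s) => ? //; lra. Qed.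
Lemma clamp_le0 s : s <= 0 -> clamp s = 0.
Proof. by rewrite clampE => ->. Qed.
Lemma clamp_ge1 s : 1 <= s -> clamp s = 1.
Proof. rewrite clampE => h; rewrite h; case: (leP s 0) => ? //; lra. Qed.

Lemma clamp_lip s t : `|clamp s - clamp t| <= `|s - t|.
Proof.
have n1 := ler_norm (s - t); have n2 := ler_norm (t - s); rewrite (distrC t s) in n2.
rewrite ler_norml !clampE; case: (leP s 0) => h1; case: (leP t 0) => h2;
  case: (leP 1 s) => h3; case: (leP 1 t) => h4 /=; apply/andP; split; lra.
Qed.

Lemma open_clamp A : open A -> open (clamp @^-1` A).
Proof.
apply: open_pre_delta => x e e0; exists e => // y hy.
exact: le_lt_trans (clamp_lip _ _) hy.
Qed.

Lemma open_affine (a b : R) A : a != 0 -> open A -> open ((fun s => a * s + b) @^-1` A).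
Proof.
move=> a0; apply: open_pre_delta => x e e0; exists (e / `|a|).
  by rewrite divr_gt0 // normr_gt0.
move=> y hy.
have -> : a * y + b - (a * x + b) = a * (y - x) by ring.
rewrite normrM -ltr_pdivlMl ?normr_gt0 // mulrC //.
Qed.

Lemma borel_open (A : set R) : open A -> borel A.
Proof. by move=> h; apply: gen_sub. Qed.

Lemma borelS : sigma_algebra setT (@borel R).
Proof. exact: gen_sigma. Qed.

Lemma borel_lt (c : R) : borel [set x | x < c].
Proof. apply: borel_open; exact: open_lt. Qed.
Lemma borel_gt (c : R) : borel [set x | c < x].
Proof. apply: borel_open; exact: open_gt. Qed.
Lemma borel_le (c : R) : borel [set x | x <= c].
Proof.
have -> : [set x : R | x <= c] = ~` [set x | c < x].
  by apply/seteqP; split=> x /=; rewrite leNgt => /negP.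
apply: sC borelS _ _; exact: borel_gt.
Qed.

Lemma borel_pre_cont (f : R -> R) :
  (forall A, open A -> open (f @^-1` A)) -> forall C, borel C -> borel (f @^-1` C).
Proof.
move=> hf C hC.
have h := @mfn_gen R R (@borel R) [set A | open A] setT f borelS (sT borelS).
have := h _ _ hC; rewrite setTI; apply => g og; rewrite setTI; apply: borel_open; exact: hf.
Qed.

Lemma mfn_sub {A B : Type} (mA : set (set A)) (mB : set (set B)) D D' (f : A -> B) :
  sigma_algebra setT mA ->
  mfn mA mB D f -> mA D' -> D' `<=` D -> mfn mA mB D' f.
Proof.
move=> HA hf hD' sub b hb.
have -> : D' `&` f @^-1` b = D' `&` (D `&` f @^-1` b).
  by apply/seteqP; split=> x /=; [case=> h1 h2; split => //; split => //; apply: sub|case=> h1 [h2 h3]].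
by apply: sI => //; apply: hf.
Qed.

Lemma mfn_comp {A B C : Type} (mA : set (set A)) (mB : set (set B)) (mC : set (set C))
  D E (f : A -> B) (g : B -> C) :
  mfn mB mC E g -> mfn mA mB D f -> (forall x, D x -> E (f x)) ->
  mfn mA mC D (g \o f).
Proof.
move=> hg hf hDE c hc.
have -> : D `&` (g \o f) @^-1` c = D `&` f @^-1` (E `&` g @^-1` c).
  by apply/seteqP; split=> x /=; [case=> h1 h2; split => //; split => //; apply: hDE|case=> h1 [h2 h3]].
by apply: hf; apply: hg.
Qed.

Lemma mfn_ext {A B : Type} (mA : set (set A)) (mB : set (set B)) D (f g : A -> B) :
  (forall x, D x -> f x = g x) -> mfn mA mB D f -> mfn mA mB D g.
Proof.
move=> e hf b hb.
have -> : D `&` g @^-1` b = D `&` f @^-1` b.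
  by apply/seteqP; split=> x /=; case=> h1 h2; split => //; rewrite ?e // -?e.
exact: hf.
Qed.

Section RealMeas.
Context {X : Type} (measX : set (set X)) (HX : sigma_algebra setT measX).

Lemma mreal_lt D (u v : X -> R) : measX D -> mfn measX (@borel R) D u ->
  mfn measX (@borel R) D v -> measX (D `&` [set t | u t < v t]).
Proof.
move=> hD hu hv.
have -> : D `&` [set t | u t < v t] =
    \bigcup_(q : rat) ((D `&` u @^-1` [set x | x < ratr q]) `&`
                      (D `&` v @^-1` [set x | ratr q < x])).
  apply/seteqP; split=> x /=.
    case=> hx huv; have [q] := rat_in_itvoo huv; rewrite in_itv /= => /andP[h1 h2].
    by exists q.
  case=> q _ [[h1 h2] [_ h3]]; split => //; exact: lt_trans h3.
apply: (@sbigU_count _ _ HX rat) => q; apply: (sI HX).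
  by apply: hu; apply: borel_lt.
by apply: hv; apply: borel_gt.
Qed.

Lemma mreal_eq D (u v : X -> R) : measX D -> mfn measX (@borel R) D u ->
  mfn measX (@borel R) D v -> measX (D `&` [set t | u t = v t]).
Proof.
move=> hD hu hv.
have -> : D `&` [set t | u t = v t] =
  D `\` ((D `&` [set t | u t < v t]) `|` (D `&` [set t | v t < u t])).
  apply/seteqP; split=> x /=.
    case=> h1 h2; split => //; rewrite h2 ltxx; by case => -[].
  case=> h1 h2; split => //; case: (ltgtP (u x) (v x)) => // h; exfalso; apply: h2.
    by left.
  by right.
apply: (sD HX) => //; apply: (sU HX); exact: mreal_lt.
Qed.

End RealMeas.

Section RnFacts.
Variable n : nat.

Definition lerp (a b : Rn n) (l : R) : Rn n := \row_i ((1 - l) * a ord0 i + l * b ord0 i).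
Definition sq (x y : Rn n) : R := \sum_(i < n) (x ord0 i - y ord0 i) ^+ 2.
Definition ratv (q : 'rV[rat]_n) : Rn n := \row_i ratr (q ord0 i).

Lemma lerpE (a b : Rn n) (l : R) (i : 'I_n) : lerp a b l ord0 i = (1 - l) * a ord0 i + l * b ord0 i.
Proof. by rewrite /lerp mxE. Qed.

Lemma lerp0 (a b : Rn n) : lerp a b 0 = a.
Proof.
apply/matrixP => i j; rewrite (ord1 i) lerpE subr0 mul1r mul0r addr0 //.
Qed.
Lemma lerp1 (a b : Rn n) : lerp a b 1 = b.
Proof.
apply/matrixP => i j; rewrite (ord1 i) lerpE subrr mul1r mul0r add0r //.
Qed.

Lemma eballE (c : Rn n) (r : R) (x : Rn n) : eball c r x = (sq x c < r ^+ 2).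
Proof. by []. Qed.

Lemma sq_ge0 (x y : Rn n) : 0 <= sq x y.
Proof. by apply: sumr_ge0 => i _; apply: sqr_ge0. Qed.

Lemma sq_coord (x y : Rn n) (i : 'I_n) : (x ord0 i - y ord0 i) ^+ 2 <= sq x y.
Proof.
rewrite /sq (bigD1 i) //= lerDl; apply: sumr_ge0 => j _; exact: sqr_ge0.
Qed.

Lemma ball_convex (c : Rn n) (r : R) (a b : Rn n) (l : R) : eball c r a -> eball c r b -> 0 <= l -> l <= 1 ->
  eball c r (lerp a b l).
Proof.
rewrite !eballE => ha hb l0 l1.
apply: (@le_lt_trans _ _ ((1 - l) * sq a c + l * sq b c)).
  2: { case: (ltP l 1) => hl.
       have h1 : 0 < (1 - l) * (r ^+ 2 - sq a c) by apply: mulr_gt0; lra.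
       have h2 : 0 <= l * (r ^+ 2 - sq b c) by apply: mulr_ge0; lra.
       nra.
     have -> : l = 1 by lra.
     rewrite subrr mul0r add0r mul1r //. }
rewrite /sq mulr_sumr mulr_sumr -big_split /=; apply: ler_sum => i _.
rewrite lerpE.
set u := a ord0 i; set v := b ord0 i; set w := c ord0 i.
have : 0 <= l * (1 - l) * (u - v) ^+ 2 by apply: mulr_ge0; [nra|apply: sqr_ge0].
move=> h; nra.
Qed.

Lemma sqr_lt_norm (d e : R) : 0 < e -> d ^+ 2 < e ^+ 2 -> `|d| < e.
Proof. move=> e0 h; rewrite ltr_norml; apply/andP; split; nra. Qed.

Lemma eopen_coord (i : 'I_n) (C : set R) : open C -> eopen [set x : Rn n | C (x ord0 i)].
Proof.
move=> oC x /= Cx.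
have [e e0 he] := openR_deltaP oC Cx.
exists e => // y /= hy; apply: he.
apply: sqr_lt_norm => //; exact: le_lt_trans (sq_coord _ _ _) hy.
Qed.

Lemma borelRnS : sigma_algebra setT (@borelRn n).
Proof. exact: gen_sigma. Qed.

Lemma borelRn_coord (i : 'I_n) (C : set R) : borel C -> borelRn [set x : Rn n | C (x ord0 i)].
Proof.
move=> hC.
have h := @mfn_gen (Rn n) R (@borelRn n) [set A | open A] setT (fun x => x ord0 i)
   borelRnS (sT borelRnS).
have := h _ _ hC; rewrite setTI; apply => g og; rewrite setTI; apply: gen_sub.
exact: eopen_coord.
Qed.

Lemma eopen_setT : eopen [set: Rn n].
Proof. by move=> x _; exists 1 => //. Qed.

Lemma rat_box (v : Rn n) (d : R) : 0 < d ->
  exists lo hi : 'rV[rat]_n, forall i,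
    [/\ v ord0 i - d < ratr (lo ord0 i), ratr (lo ord0 i) < v ord0 i,
        v ord0 i < ratr (hi ord0 i) & ratr (hi ord0 i) < v ord0 i + d].
Proof.
move=> d0.
have hlo : forall i : 'I_n, exists q : rat, v ord0 i - d < ratr q < v ord0 i.
  move=> i; have [|q] := @rat_in_itvoo _ (v ord0 i - d) (v ord0 i); first lra.
  by rewrite in_itv /=; exists q.
have hhi : forall i : 'I_n, exists q : rat, v ord0 i < ratr q < v ord0 i + d.
  move=> i; have [|q] := @rat_in_itvoo _ (v ord0 i) (v ord0 i + d); first lra.
  by rewrite in_itv /=; exists q.
have [flo Hlo] := boolp.choice hlo; have [fhi Hhi] := boolp.choice hhi.
exists (\row_i flo i), (\row_i fhi i) => i; rewrite !mxE.
by case/andP: (Hlo i) => ? ?; case/andP: (Hhi i) => ? ?.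
Qed.

Definition inbox (a : Rn n) (lo hi : 'rV[rat]_n) :=
  forall i, ratr (lo ord0 i) < a ord0 i /\ a ord0 i < ratr (hi ord0 i).

Definition goodbox (W : set (Rn n)) (alo ahi blo bhi : 'rV[rat]_n) (llo lhi : rat) :=
  forall a b l, 0 <= l -> l <= 1 -> inbox a alo ahi -> inbox b blo bhi ->
    ratr llo < l -> l < ratr lhi -> W (lerp a b l).

Lemma small_aux (c e K : R) : 0 < e -> 1 <= K -> c < K -> c * (e / K) ^+ 2 < e ^+ 2.
Proof.
move=> e0 K1 cK.
have K0 : 0 < K by lra.
rewrite expr_div_n mulrA ltr_pdivrMr ?exprn_gt0 //.
have e2 : 0 < e ^+ 2 by apply: exprn_gt0.
have h1 : c * e ^+ 2 < K * e ^+ 2 by rewrite ltr_pM2r.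
have h2 : K * e ^+ 2 <= K ^+ 2 * e ^+ 2 by rewrite ler_pM2r // expr2; nra.
lra.
Qed.

Lemma box_exists (W : set (Rn n)) (a b : Rn n) (l : R) : eopen W -> 0 <= l -> l <= 1 ->
  W (lerp a b l) -> exists alo ahi blo bhi llo lhi,
  [/\ inbox a alo ahi, inbox b blo bhi, ratr llo < l /\ l < ratr lhi &
      goodbox W alo ahi blo bhi llo lhi].
Proof.
move=> oW l0 l1 Wp.
have [e e0 he] := oW _ Wp.
set M2 := sq b a.
have M20 : 0 <= M2 by apply: sq_ge0.
set K := 3 * (n%:R + 1) * (2 + M2).
have K1 : 1 <= K.
  rewrite /K; have := ler0n R n; nra.
set d := e / K.
have d0 : 0 < d by rewrite /d divr_gt0 //; lra.
have [alo [ahi ha]] := rat_box a d0.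
have [blo [bhi hb]] := rat_box b d0.
have [llo hllo] : exists q : rat, l - d < ratr q < l.
  have [|q] := @rat_in_itvoo _ (l - d) l; first lra.
  by rewrite in_itv /=; exists q.
have [lhi hlhi] : exists q : rat, l < ratr q < l + d.
  have [|q] := @rat_in_itvoo _ l (l + d); first lra.
  by rewrite in_itv /=; exists q.
case/andP: hllo => hl1 hl2; case/andP: hlhi => hl3 hl4.
exists alo, ahi, blo, bhi, llo, lhi; split.
- by move=> i; have [? ? ? ?] := ha i.
- by move=> i; have [? ? ? ?] := hb i.
- by [].
move=> a' b' l' l'0 l'1 ia ib hl'1 hl'2.
apply: he; rewrite eballE.
have key : forall i, (lerp a' b' l' ord0 i - lerp a b l ord0 i) ^+ 2 <=
                     3 * (d ^+ 2 * (2 + M2)).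
  move=> i; rewrite !lerpE.
  have [h1 h2 h3 h4] := ha i; have [h5 h6 h7 h8] := hb i.
  have [h9 h10] := ia i; have [h11 h12] := ib i.
  have hm := sq_coord b a i; rewrite -/M2 in hm.
  set x := a' ord0 i - a ord0 i; set y := b' ord0 i - b ord0 i.
  set z := l' - l; set w := b ord0 i - a ord0 i.
  have -> : (1 - l') * a' ord0 i + l' * b' ord0 i - ((1 - l) * a ord0 i + l * b ord0 i)
          = (1 - l') * x + l' * y + z * w by rewrite /x /y /z /w; ring.
  have hx : x ^+ 2 <= d ^+ 2 by rewrite /x; nra.
  have hy : y ^+ 2 <= d ^+ 2 by rewrite /y; nra.
  have hz : z ^+ 2 <= d ^+ 2 by rewrite /z; nra.
  have hw : w ^+ 2 <= M2 by [].
  have t1 : ((1 - l') * x) ^+ 2 <= d ^+ 2.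
    rewrite exprMn -[X in _ <= X]mul1r; apply: ler_pM; rewrite ?sqr_ge0 //; nra.
  have t2 : (l' * y) ^+ 2 <= d ^+ 2.
    rewrite exprMn -[X in _ <= X]mul1r; apply: ler_pM; rewrite ?sqr_ge0 //; nra.
  have t3 : (z * w) ^+ 2 <= d ^+ 2 * M2.
    rewrite exprMn; apply: ler_pM => //; apply: sqr_ge0.
  have t4 : forall p q r : R, (p + q + r) ^+ 2 <= 3 * (p ^+ 2 + q ^+ 2 + r ^+ 2).
    move=> p q r.
    have := sqr_ge0 (p - q); have := sqr_ge0 (q - r); have := sqr_ge0 (p - r).
    rewrite !expr2 => *; nra.
  apply: le_trans (t4 _ _ _) _; nra.
apply: (@le_lt_trans _ _ (\sum_(i < n) 3 * (d ^+ 2 * (2 + M2)))).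
  by apply: ler_sum => i _; apply: key.
rewrite sumr_const card_ord -[_ *+ n]mulr_natl.
have -> : n%:R * (3 * (d ^+ 2 * (2 + M2))) = (n%:R * 3 * (2 + M2)) * (e / K) ^+ 2.
  by rewrite /d; ring.
apply: small_aux => //.
rewrite /K; have := ler0n R n; nra.
Qed.

End RnFacts.

Section Charts.
Variables (X : topologicalType) (measX : set (set X)) (n : nat).
Hypothesis HX : sigma_algebra setT measX.
Variable x0 : X.

Definition chart := (set X * (X -> Rn n * R))%type.

Definition psi (c : chart) (z : Rn n * R) : X :=
  match pselect (exists x, c.1 x /\ c.2 x = z) with
  | left h => proj1_sig (cid h)
  | right _ => x0
  end.

Definition ImC (c : chart) : set (Rn n * R) := c.2 @` c.1.

Lemma psiP (c : chart) z : ImC c z -> c.1 (psi c z) /\ c.2 (psi c z) = z.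
Proof.
move=> hz; rewrite /psi; case: pselect => [h|h]; last first.
  by exfalso; apply: h; case: hz => x hx e; exists x.
by case: (cid h).
Qed.

Lemma ImC_phi (c : chart) x : c.1 x -> ImC c (c.2 x).
Proof. by move=> h; exists x. Qed.

Section OneChart.
Variable c : chart.
Hypothesis Hc : MT_chart measX c.1 c.2.

Lemma chart_data : exists (cc : Rn n) (r : R) (S : set R),
  [/\ 0 < r, borel S, ImC c = eball cc r `*` S &
      MT_iso measX (@EDopen n) (@EDmeas n) c.1 (eball cc r `*` S) c.2].
Proof.
case: Hc => _ _ [cc [r [S [r0 bS iso]]]]; exists cc, r, S; split => //.
case: iso => -[hf hi hs] _ _.
apply/seteqP; split => z.
  by case=> x hx <-; apply: hf.
by move=> /hs [x hx <-]; exists x.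
Qed.

Lemma chart_open : open c.1.
Proof. by case: Hc. Qed.
Lemma chart_meas : measX c.1.
Proof. by case: Hc. Qed.

Lemma psiK x : c.1 x -> psi c (c.2 x) = x.
Proof.
move=> hx; have [h1 h2] := psiP (ImC_phi hx).
have [cc [r [S [_ _ _ [[_ hi _] _ _]]]]] := chart_data.
by apply: hi; rewrite ?in_setE.
Qed.

Lemma chart_iso_meas W : W `<=` ImC c -> (EDmeas W <-> measX (c.1 `&` c.2 @^-1` W)).
Proof.
have [cc [r [S [_ _ -> [_ _ hm]]]]] := chart_data; exact: hm.
Qed.

Lemma chart_iso_open W : W `<=` ImC c -> (EDopen W <-> open (c.1 `&` c.2 @^-1` W)).
Proof.
have [cc [r [S [_ _ -> [_ ho _]]]]] := chart_data; exact: ho.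
Qed.

Lemma pre_ImC : c.1 `&` c.2 @^-1` ImC c = c.1.
Proof.
by apply/seteqP; split => x /=; [case|move=> h; split => //; apply: ImC_phi].
Qed.

Lemma ImC_meas : EDmeas (ImC c).
Proof. apply/chart_iso_meas => //; rewrite pre_ImC; exact: chart_meas. Qed.

Lemma ImC_open : EDopen (ImC c).
Proof. apply/chart_iso_open => //; rewrite pre_ImC; exact: chart_open. Qed.

Lemma EDmeasS : sigma_algebra setT (@EDmeas n).
Proof. exact: gen_sigma. Qed.

Lemma phi_mfn : mfn measX (@EDmeas n) c.1 c.2.
Proof.
move=> W hW.
have -> : c.1 `&` c.2 @^-1` W = c.1 `&` c.2 @^-1` (W `&` ImC c).
  by apply/seteqP; split => x /=; [case=> h1 h2; split => //; split => //; apply: ImC_phi|case=> h1 []].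
apply/chart_iso_meas; first by apply: subIsetr.
by apply: (sI EDmeasS) => //; apply: ImC_meas.
Qed.

Lemma pre_img B : c.1 `&` c.2 @^-1` [set z | ImC c z /\ B (psi c z)] = c.1 `&` B.
Proof.
apply/seteqP; split => x /=.
  by case=> h1 [h2 h3]; split => //; rewrite -(psiK h1).
by case=> h1 h2; split => //; split; [apply: ImC_phi|rewrite psiK].
Qed.

Lemma img_meas B : measX B -> EDmeas [set z | ImC c z /\ B (psi c z)].
Proof.
move=> hB; apply/chart_iso_meas; first by move=> z [].
rewrite pre_img; apply: (sI HX) => //; exact: chart_meas.
Qed.

Lemma img_open B : open B -> EDopen [set z | ImC c z /\ B (psi c z)].
Proof.
move=> hB; apply/chart_iso_open; first by move=> z [].
rewrite pre_img; apply: openI => //; exact: chart_open.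
Qed.

Lemma plaque_open (s : R) : open [set x | c.1 x /\ (c.2 x).2 = s].
Proof.
have -> : [set x | c.1 x /\ (c.2 x).2 = s] = c.1 `&` c.2 @^-1` [set z | ImC c z /\ z.2 = s].
  apply/seteqP; split => x /=; first by case=> h1 h2; split => //; split => //; apply: ImC_phi.
  by case=> h1 [_ h2].
apply/chart_iso_open; first by move=> z [].
move=> t.
case: (pselect (t = s)) => [->|ne].
  have hI : EDopen (ImC c) := ImC_open.
  suff -> : [set x | ImC c (x, s) /\ (x, s).2 = s] = [set x | ImC c (x, s)] by apply: hI.
  by apply/seteqP; split => x /=; [case|move=> h; split].
move=> x [_ /= e]; by exfalso; apply: ne.
Qed.

Lemma ImC_lerp (v w : Rn n) (s l : R) : ImC c (v, s) -> ImC c (w, s) -> 0 <= l -> l <= 1 ->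
  ImC c (lerp v w l, s).
Proof.
have [cc [r [S [_ _ -> _]]]] := chart_data.
move=> [hv hs] [hw _] l0 l1; split => //=; exact: ball_convex.
Qed.

End OneChart.
End Charts.

Lemma openR_local (A : set R) :
  (forall x, A x -> exists B, [/\ open B, B x & B `<=` A]) -> open A.
Proof.
move=> h; apply: openR_delta => x Ax.
have [B [oB Bx BA]] := h x Ax.
have [e e0 he] := openR_deltaP oB Bx.
by exists e => // y /he /BA.
Qed.

Lemma open_itv (a b : R) : open [set x | a < x /\ x < b].
Proof.
have -> : [set x | a < x /\ x < b] = [set x | a < x] `&` [set x | x < b] by [].
apply: openI; [exact: open_gt|exact: open_lt].
Qed.

Section Paths.
Variables (X : topologicalType) (n : nat) (x0 : X).

Definition concat (f g : R -> X) (s : R) : X :=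
  if s <= 2^-1 then f (2 * s) else g (2 * s - 1).

Lemma concat_cont (f g : R -> X) : continuous f -> continuous g -> f 1 = g 0 ->
  continuous (concat f g).
Proof.
move=> /continuousP cf /continuousP cg e; apply/continuousP => O oO.
set Pf := (fun s : R => 2 * s + 0) @^-1` (f @^-1` O).
set Pg := (fun s : R => 2 * s + -1) @^-1` (g @^-1` O).
have oPf : open Pf by apply: open_affine => //; apply: cf.
have oPg : open Pg by apply: open_affine => //; apply: cg.
have -> : concat f g @^-1` O =
   ([set s | s < 2^-1] `&` Pf) `|` ([set s | 2^-1 < s] `&` Pg) `|` (Pf `&` Pg).
  apply/seteqP; split => s; rewrite /concat /Pf /Pg /= ?addr0; case: (ltgtP s 2^-1) => hs /=.
  - by move=> h; left; left.
  - by move=> h; left; right.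
  - move=> h; right; split => //; rewrite hs mulfV // in h *; rewrite subrr -e //.
  - by move=> [[[? ?]|[? ?]]|[? ?]].
  - by move=> [[[? ?]|[? ?]]|[? ?]].
  - by move=> [[[? ?]|[? ?]]|[? ?]].
apply: openU; first apply: openU.
- apply: openI => //; exact: open_lt.
- apply: openI => //; exact: open_gt.
- exact: openI.
Qed.

Lemma concat0 (f g : R -> X) : concat f g 0 = f 0.
Proof. by rewrite /concat invr_ge0 ler0n mulr0. Qed.

Lemma concat1 (f g : R -> X) : concat f g 1 = g 1.
Proof.
rewrite /concat; case: ifP => h.
  exfalso; move: h; rewrite invf_ge1 //; lra.
congr g; lra.
Qed.

Definition seg (c : chart X n) (x : X) (y : Rn n) (s : R) : X :=
  psi x0 c (lerp (c.2 x).1 y (clamp s), (c.2 x).2).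

Lemma seg_cont (measX : set (set X)) (c : chart X n) x y :
  MT_chart measX c.1 c.2 -> c.1 x -> ImC c (y, (c.2 x).2) -> continuous (seg c x y).
Proof.
move=> Hc hx hy; apply/continuousP => O oO.
have hIm : forall s, ImC c (lerp (c.2 x).1 y (clamp s), (c.2 x).2).
  move=> s; apply: (ImC_lerp Hc) => //; rewrite ?clamp_ge0 ?clamp_le1 //.
  by rewrite -surjective_pairing; apply: ImC_phi.
set V := [set v | [set z | ImC c z /\ O (psi x0 c z)] (v, (c.2 x).2)].
have oV : eopen V by move=> v; apply: (@img_open _ _ _ x0 _ Hc _ oO).
apply: openR_local => s0 /= Os0.
have Vs0 : V (lerp (c.2 x).1 y (clamp s0)) by split.
have [alo [ahi [blo [bhi [llo [lhi [ia ib [hl1 hl2] good]]]]]]] :=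
  box_exists oV (clamp_ge0 s0) (clamp_le1 s0) Vs0.
exists (clamp @^-1` [set l | ratr llo < l /\ l < ratr lhi]); split => //.
  by apply: open_clamp; apply: open_itv.
move=> s /= [h1 h2].
have := good _ _ _ (clamp_ge0 s) (clamp_le1 s) ia ib h1 h2.
by case.
Qed.

Lemma seg0 (measX : set (set X)) (c : chart X n) x y : MT_chart measX c.1 c.2 ->
  c.1 x -> seg c x y 0 = x.
Proof.
move=> Hc hx; rewrite /seg clamp_le0 // lerp0 -surjective_pairing (@psiK _ _ _ x0 _ Hc x hx) //.
Qed.

Lemma seg1 (c : chart X n) x y : seg c x y 1 = psi x0 c (y, (c.2 x).2).
Proof. by rewrite /seg clamp_ge1 // lerp1. Qed.

End Paths.

Section JointMeas.
Variables (X : topologicalType) (measX : set (set X)) (n : nat) (x0 : X).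
Hypothesis HX : sigma_algebra setT measX.

Local Notation XR := (XRmeas measX).

Lemma XRS : sigma_algebra setT XR.
Proof. exact: gen_sigma. Qed.

Lemma XR_rect A C : measX A -> borel C -> XR (A `*` C).
Proof. by move=> hA hC; apply: gen_sub; exists A => //; exists C. Qed.

Lemma ED_rect (A : set (Rn n)) C : borelRn A -> borel C -> EDmeas (A `*` C).
Proof. by move=> hA hC; apply: gen_sub; exists A => //; exists C. Qed.

Lemma XR_affine (a b : R) E : a != 0 -> XR E -> XR [set p | E (p.1, a * p.2 + b)].
Proof.
move=> a0 hE.
have h := @mfn_gen (X * R)%type (X * R)%type XR
  [set A `*` C | A in measX & C in @borel R] setT (fun p => (p.1, a * p.2 + b)) XRS (sT XRS).
have := h _ _ hE; rewrite setTI; apply.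

move=> g /= [A hA [C hC <-]]; rewrite setTI.
have -> : (fun p : X * R => (p.1, a * p.2 + b)) @^-1` (A `*` C) =
          A `*` ((fun s => a * s + b) @^-1` C).
  by apply/seteqP; split => z.
apply: XR_rect => //; apply: borel_pre_cont hC => O oO; exact: open_affine.
Qed.

Lemma proj_coord_mfn (i : 'I_n) : mfn (@EDmeas n) (@borel R) setT (fun z : Rn n * R => z.1 ord0 i).
Proof.
move=> C hC; rewrite setTI.
have -> : (fun z : Rn n * R => z.1 ord0 i) @^-1` C = [set x : Rn n | C (x ord0 i)] `*` setT.
  by apply/seteqP; split => z //=; case.
apply: ED_rect.
  exact: borelRn_coord.
exact: (sT borelS).
Qed.

Lemma proj2_mfn : mfn (@EDmeas n) (@borel R) setT (fun z : Rn n * R => z.2).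
Proof.
move=> C hC; rewrite setTI.
have -> : (fun z : Rn n * R => z.2) @^-1` C = setT `*` C.
  by apply/seteqP; split => z /=; [move=> h; split|case].
by apply: ED_rect => //; exact: (sT (@borelRnS n)).
Qed.

Section ChartCoords.
Variable c : chart X n.
Hypothesis Hc : MT_chart measX c.1 c.2.
Variables (D : set X) (f : X -> X).
Hypothesis hD : measX D.
Hypothesis hf : mfn measX measX D f.
Hypothesis hfU : forall t, D t -> c.1 (f t).

Lemma phif_mfn : mfn measX (@EDmeas n) D (c.2 \o f).
Proof. exact: (mfn_comp (phi_mfn Hc) hf hfU). Qed.

Lemma coord_mfn (i : 'I_n) : mfn measX (@borel R) D (fun t => (c.2 (f t)).1 ord0 i).
Proof.
exact: (mfn_comp (proj_coord_mfn i) phif_mfn (fun _ _ => I)).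
Qed.

Lemma sig_mfn : mfn measX (@borel R) D (fun t => (c.2 (f t)).2).
Proof.
exact: (mfn_comp proj2_mfn phif_mfn (fun _ _ => I)).
Qed.
End ChartCoords.

Definition coordm (D : set X) (a : X -> Rn n) :=
  forall i : 'I_n, mfn measX (@borel R) D (fun t => a t ord0 i).

Lemma inbox_meas D (a : X -> Rn n) lo hi : measX D -> coordm D a ->
  measX [set t | D t /\ inbox (a t) lo hi].
Proof.
move=> hD ha.
have -> : [set t | D t /\ inbox (a t) lo hi] =
  D `&` \bigcap_(i : 'I_n) (D `&` (fun t => a t ord0 i) @^-1`
            [set x | ratr (lo ord0 i) < x /\ x < ratr (hi ord0 i)]).
  apply/seteqP; split => t /=.
    by case=> h1 h2; split => // i _; split => //; apply: h2.
  by case=> h1 h2; split => // i; have [] := h2 i I.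
apply: (sI HX) => //; apply: (@sbigI_count _ _ HX 'I_n) => i.
apply: ha; apply: borel_open; exact: open_itv.
Qed.

Lemma lerp_joint D (a b : X -> Rn n) (W : set (Rn n)) : measX D -> coordm D a -> coordm D b ->
  eopen W -> XR ((D `*` setT) `&` [set p | W (lerp (a p.1) (b p.1) (clamp p.2))]).
Proof.
move=> hD ha hb oW.
pose F (d : 'rV[rat]_n * 'rV[rat]_n * 'rV[rat]_n * 'rV[rat]_n * rat * rat) :=
  let: (alo, ahi, blo, bhi, llo, lhi) := d in
  [set p : X * R | (([set t | D t /\ inbox (a t) alo ahi] `&` [set t | D t /\ inbox (b t) blo bhi])
         `*` (clamp @^-1` [set l | ratr llo < l /\ l < ratr lhi])) p
      /\ goodbox W alo ahi blo bhi llo lhi].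
have -> : (D `*` setT) `&` [set p | W (lerp (a p.1) (b p.1) (clamp p.2))] = \bigcup_d F d.
  apply/seteqP; split => -[t s] /=.
    case=> -[Dt _] hW.
    have [alo [ahi [blo [bhi [llo [lhi [ia ib [hl1 hl2] good]]]]]]] :=
      box_exists oW (clamp_ge0 s) (clamp_le1 s) hW.
    by exists (alo, ahi, blo, bhi, llo, lhi) => //=.
  case=> -[[[[[alo ahi] blo] bhi] llo] lhi] _ /= [[[[Dt ia] [_ ib]] [l1 l2]] good].
  split => //; apply: good => //; [exact: clamp_ge0|exact: clamp_le1].
apply: (@sbigU_count _ _ XRS) => -[[[[[alo ahi] blo] bhi] llo] lhi] /=.
apply: (@sprop _ _ XRS (goodbox W alo ahi blo bhi llo lhi)).
have h1 : measX ([set t | D t /\ inbox (a t) alo ahi] `&` [set t | D t /\ inbox (b t) blo bhi]).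
  by apply: (sI HX); apply: inbox_meas.
have h2 : borel (clamp @^-1` [set l | ratr llo < l /\ l < ratr lhi]).
  apply: borel_pre_cont; first exact: open_clamp.
  apply: borel_open; exact: open_itv.
exact: (XR_rect h1 h2).
Qed.

Lemma ED_joint D (a b : X -> Rn n) (sg : X -> R) (W : set (Rn n * R)) :
  measX D -> coordm D a -> coordm D b -> mfn measX (@borel R) D sg ->
  EDmeas W ->
  XR ((D `*` setT) `&` [set p | W (lerp (a p.1) (b p.1) (clamp p.2), sg p.1)]).
Proof.
move=> hD ha hb hs hW.
have hDT : XR (D `*` setT) by apply: XR_rect => //; exact: (sT borelS).
have h := @mfn_gen (X * R)%type (Rn n * R)%type XR
  [set A `*` C | A in @borelRn n & C in @borel R] (D `*` setT)
  (fun p => (lerp (a p.1) (b p.1) (clamp p.2), sg p.1)) XRS hDT.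
apply: (h _ W hW) => g /= [A hA [C hC <-]].
have -> : (D `*` setT) `&` (fun p => (lerp (a p.1) (b p.1) (clamp p.2), sg p.1)) @^-1` (A `*` C)
  = ((D `*` setT) `&` [set p | A (lerp (a p.1) (b p.1) (clamp p.2))]) `&`
    ((D `&` sg @^-1` C) `*` setT).
  apply/seteqP; split => -[t s] /=.
    by case=> -[Dt _] [h1 h2].
  by case=> -[[Dt _] h1] [[_ h2] _].
apply: (sI XRS); last by apply: XR_rect; [apply: hs|exact: (sT borelS)].
have h2 := @mfn_gen (X * R)%type (Rn n) XR
  [set A | eopen A] (D `*` setT)
  (fun p => lerp (a p.1) (b p.1) (clamp p.2)) XRS hDT.
have h3 := h2 (fun g' og' => lerp_joint hD ha hb og').
exact: (h3 A hA).
Qed.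

Lemma seg_joint (c : chart X n) (D : set X) (f : X -> X) (y : X -> Rn n) B :
  MT_chart measX c.1 c.2 -> measX D -> mfn measX measX D f ->
  (forall t, D t -> c.1 (f t)) -> coordm D y ->
  (forall t, D t -> ImC c (y t, (c.2 (f t)).2)) -> measX B ->
  XR ((D `*` setT) `&` [set p | B (seg x0 c (f p.1) (y p.1) p.2)]).
Proof.
move=> Hc hD hf hfU hy hIm hB.
have -> : (D `*` setT) `&` [set p | B (seg x0 c (f p.1) (y p.1) p.2)] =
  (D `*` setT) `&` [set p | [set z | ImC c z /\ B (psi x0 c z)]
       (lerp ((fun t => (c.2 (f t)).1) p.1) (y p.1) (clamp p.2), (c.2 (f p.1)).2)].
  apply/seteqP; split => -[t s] /=.
    case=> -[Dt _] h; split => //; split => //.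
    apply: (ImC_lerp Hc); rewrite ?clamp_ge0 ?clamp_le1 //; last exact: hIm.
    by rewrite -surjective_pairing; apply: ImC_phi; apply: hfU.
  by case=> -[Dt _] [_ h].

exact: (ED_joint hD (fun i => coord_mfn Hc hf hfU i) hy (sig_mfn Hc hf hfU) (img_meas HX x0 Hc hB)).
Qed.

Lemma concat_joint (D : set X) (F G : X -> R -> X) B :
  measX D ->
  XR ((D `*` setT) `&` [set p | B (F p.1 p.2)]) ->
  XR ((D `*` setT) `&` [set p | B (G p.1 p.2)]) ->
  XR ((D `*` setT) `&` [set p | B (concat (F p.1) (G p.1) p.2)]).
Proof.
move=> hD hF hG.
have -> : (D `*` setT) `&` [set p | B (concat (F p.1) (G p.1) p.2)] =
  ((setT `*` [set s | s <= 2^-1]) `&`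
     [set p | ((D `*` setT) `&` [set p | B (F p.1 p.2)]) (p.1, 2 * p.2 + 0)]) `|`
  ((setT `*` ~` [set s | s <= 2^-1]) `&`
     [set p | ((D `*` setT) `&` [set p | B (G p.1 p.2)]) (p.1, 2 * p.2 + -1)]).
  apply/seteqP; split => -[t s] /=; rewrite /concat ?addr0.
    case: ifP => hs [[Dt _] h].
      by left.
    by right; split => //; split => //; rewrite hs.
  case=> -[[_ hs] [[Dt _] h]]; split => //.
    by move: h; rewrite hs.
  by move: h; case: ifP.
apply: (sU XRS); apply: (sI XRS).
- apply: XR_rect; [exact: (sT HX)|exact: borel_le].
- by apply: XR_affine.
- apply: XR_rect; [exact: (sT HX)|apply: (sC borelS); exact: borel_le].
- by apply: XR_affine.
Qed.

End JointMeas.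



Lemma open_local {T : topologicalType} (A : set T) :
  (forall x, A x -> exists B, [/\ open B, B x & B `<=` A]) -> open A.
Proof.
move=> h.
have -> : A = \bigcup_(B in [set B | open B /\ B `<=` A]) B.
  apply/seteqP; split => x.
    by move=> /h [B [oB Bx BA]]; exists B.
  by case=> B [_ BA] /BA.
by apply: bigcup_open => B [].
Qed.

Section Main.
Variables (X : topologicalType) (measX : set (set X)) (n : nat) (x0 : X).
Hypothesis HX : sigma_algebra setT measX.
Variable At : set (chart X n).
Hypothesis HAt : forall c, At c -> MT_chart measX c.1 c.2.
Variable e : nat -> chart X n.

Local Notation XR := (XRmeas measX).
Local Notation sig k x := (((e k).2 x).2).

Definition step (k : nat) (q : 'rV[rat]_n) (x : X) : X :=
  psi x0 (e k) (ratv q, sig k x).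

Fixpoint vaux (l : seq (nat * 'rV[rat]_n)) (m : nat) (x z : X) : Prop :=
  match l with
  | [::] => [/\ At (e m), (e m).1 x, (e m).1 z & sig m z = sig m x]
  | (k, q) :: l' => [/\ At (e k), (e k).1 x, ImC (e k) (ratv q, sig k x) &
                       vaux l' m (step k q x) z]
  end.

Fixpoint path (l : seq (nat * 'rV[rat]_n)) (m : nat) (x z : X) : R -> X :=
  match l with
  | [::] => seg x0 (e m) x ((e m).2 z).1
  | (k, q) :: l' => concat (seg x0 (e k) x (ratv q)) (path l' m (step k q x) z)
  end.

Lemma path0 l m x z : vaux l m x z -> path l m x z 0 = x.
Proof.
case: l => [|[k q] l] /=.
  by case=> hA hx _ _; apply: (seg0 x0 _ (HAt hA)).
case=> hA hx _ _; rewrite concat0; exact: (seg0 x0 _ (HAt hA)).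
Qed.

Lemma path1 l m x z : vaux l m x z -> path l m x z 1 = z.
Proof.
elim: l x => [|[k q] l IH] x /=.
  case=> hA hx hz e1; rewrite seg1 -e1 -surjective_pairing.
  exact: (psiK x0 (HAt hA)).
case=> hA hx _ hv; rewrite concat1; exact: IH.
Qed.

Lemma path_cont l m x z : vaux l m x z -> continuous (path l m x z).
Proof.
elim: l x => [|[k q] l IH] x /=.
  case=> hA hx hz e1; apply: (seg_cont (HAt hA)) => //.
  by rewrite -e1 -surjective_pairing; apply: ImC_phi.
case=> hA hx hq hv; apply: concat_cont.
- exact: (seg_cont (HAt hA)).
- exact: IH.
- by rewrite seg1 (path0 hv).
Qed.

Lemma psi_mfn c : MT_chart measX c.1 c.2 -> mfn (@EDmeas n) measX (ImC c) (psi x0 c).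
Proof.
move=> Hc B hB.
have -> : ImC c `&` psi x0 c @^-1` B = [set z | ImC c z /\ B (psi x0 c z)] by [].
exact: (img_meas HX x0 Hc hB).
Qed.

Lemma pair_mfn D (v : Rn n) (s : X -> R) : measX D -> mfn measX (@borel R) D s ->
  mfn measX (@EDmeas n) D (fun t => (v, s t)).
Proof.
move=> hD hs; apply: mfn_gen => // g /= [A hA [C hC <-]].
case: (pselect (A v)) => Av.
  have -> : D `&` (fun t => (v, s t)) @^-1` (A `*` C) = D `&` s @^-1` C.
    by apply/seteqP; split => t /=; [case=> h1 [h2 h3]|case=> h1 h2].
  exact: hs.
have -> : D `&` (fun t => (v, s t)) @^-1` (A `*` C) = set0.
  by apply/seteqP; split => t //= [_ []].
exact: (s0 HX).
Qed.

Lemma const_coordm D (v : Rn n) : measX D -> coordm measX D (fun _ => v).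
Proof.
move=> hD i C hC.
case: (pselect (C (v ord0 i))) => h.
  by have -> : D `&` (fun=> v ord0 i) @^-1` C = D by apply/seteqP; split => t //= [].
have -> : D `&` (fun=> v ord0 i) @^-1` C = set0 by apply/seteqP; split => t //= [].
exact: (s0 HX).
Qed.

Lemma pre_meas D (f : X -> X) B : measX D -> mfn measX measX D f -> measX B ->
  measX (D `&` f @^-1` B).
Proof. by move=> hD hf hB; apply: hf. Qed.

Lemma step_mfn D f k q : measX D -> mfn measX measX D f -> At (e k) ->
  (forall t, D t -> (e k).1 (f t)) ->
  (forall t, D t -> ImC (e k) (ratv q, sig k (f t))) ->
  mfn measX measX D (fun t => step k q (f t)).
Proof.
move=> hD hf hA hU hI.
have Hc := HAt hA.
have := mfn_comp (psi_mfn Hc) (pair_mfn (ratv q) hD (sig_mfn Hc hf hU)) hI.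
by [].
Qed.

Lemma vaux_meas l m D (f g : X -> X) : measX D -> mfn measX measX D f ->
  mfn measX measX D g -> measX (D `&` [set t | vaux l m (f t) (g t)]).
Proof.
elim: l D f => [|[k q] l IH] D f hD hf hg /=.
  case: (pselect (At (e m))) => hA; last first.
    have -> : D `&` [set t | [/\ At (e m), (e m).1 (f t), (e m).1 (g t)
      & sig m (g t) = sig m (f t)]] = set0 by apply/seteqP; split => t //= [_ []].
    exact: (s0 HX).
  have Hc := HAt hA.
  set D1 := (D `&` f @^-1` (e m).1) `&` (D `&` g @^-1` (e m).1).
  have hU := chart_meas Hc.
  have hD1 : measX D1 by apply: (sI HX); exact: pre_meas.
  have sub1 : D1 `<=` D by move=> t [[]].
  have hf1 := mfn_sub HX hf hD1 sub1.
  have hg1 := mfn_sub HX hg hD1 sub1.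
  rewrite [X in measX X](_ : _ = D1 `&` [set t | sig m (g t) = sig m (f t)]).
    exact: (mreal_eq HX hD1 (sig_mfn Hc hg1 (fun t (ht : D1 t) => ht.2.2))
      (sig_mfn Hc hf1 (fun t (ht : D1 t) => ht.1.2))).
  apply/seteqP; split => t /=.
    by case=> h1 [_ h2 h3 h4].
  by case=> -[[h1 h2] [_ h3]] h4.
case: (pselect (At (e k))) => hA; last first.
  have -> : D `&` [set t | [/\ At (e k), (e k).1 (f t), ImC (e k) (ratv q, sig k (f t))
      & vaux l m (step k q (f t)) (g t)]] = set0 by apply/seteqP; split => t //= [_ []].
  exact: (s0 HX).
have Hc := HAt hA.
have hU := chart_meas Hc.
set D0 := D `&` f @^-1` (e k).1.
have hD0 : measX D0 by exact: pre_meas.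
have sub0 : D0 `<=` D by move=> t [].
have hf0 := mfn_sub HX hf hD0 sub0.
set D1 := D0 `&` (fun t => (ratv q, sig k (f t))) @^-1` ImC (e k).
have hD1 : measX D1.
  apply: (pair_mfn (ratv q) hD0 (sig_mfn Hc hf0 (fun t (ht : D0 t) => ht.2))).
  exact: (ImC_meas Hc).
have sub1 : D1 `<=` D by move=> t [[]].
have hf1 := mfn_sub HX hf hD1 sub1.
have hg1 := mfn_sub HX hg hD1 sub1.
have hs1 : mfn measX measX D1 (fun t => step k q (f t)).
  apply: step_mfn => //; [by move=> t [[]]|by move=> t [_]].
rewrite [X in measX X](_ : _ = D1 `&` [set t | vaux l m (step k q (f t)) (g t)]).
  exact: (IH D1 (fun t => step k q (f t)) hD1 hs1 hg1).
apply/seteqP; split => t /=.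
  by case=> h1 [_ h2 h3 h4].
by case=> -[[h1 h2] h3] h4.
Qed.

Lemma path_meas l m D (f g : X -> X) : measX D -> mfn measX measX D f ->
  mfn measX measX D g -> (forall t, D t -> vaux l m (f t) (g t)) ->
  forall B, measX B -> XR ((D `*` setT) `&` [set p | B (path l m (f p.1) (g p.1) p.2)]).
Proof.
move=> + + hg; elim: l f => [|[k q] l IH] f hD hf hv B hB.
  case: (pselect (exists t, D t)) => [[t0 Dt0]|nD]; last first.
    rewrite [X in XR X](_ : _ = set0); first exact: (s0 (XRS measX)).
    by apply/seteqP; split => -[t s] //= [[Dt _] _]; apply: nD; exists t.
  have [hA _ _ _] := hv t0 Dt0.
  have Hc := HAt hA.
  have hU : forall t, D t -> (e m).1 (f t) by move=> t /hv [].
  have hUg : forall t, D t -> (e m).1 (g t) by move=> t /hv [].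
  have hy : coordm measX D (fun t => ((e m).2 (g t)).1) := fun i => coord_mfn Hc hg hUg i.
  have hI : forall t, D t -> ImC (e m) (((e m).2 (g t)).1, sig m (f t)).
    move=> t /hv [_ _ hz <-]; rewrite -surjective_pairing; exact: ImC_phi.
  exact: (seg_joint x0 HX Hc hD hf hU hy hI hB).
case: (pselect (exists t, D t)) => [[t0 Dt0]|nD]; last first.
  rewrite [X in XR X](_ : _ = set0); first exact: (s0 (XRS measX)).
  by apply/seteqP; split => -[t s] //= [[Dt _] _]; apply: nD; exists t.
have [hA _ _ _] := hv t0 Dt0.
have Hc := HAt hA.
have hU : forall t, D t -> (e k).1 (f t) by move=> t /hv [].
have hI : forall t, D t -> ImC (e k) (ratv q, sig k (f t)) by move=> t /hv [].
have h1 := seg_joint x0 HX Hc hD hf hU (const_coordm (ratv q) hD) hI hB.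
have h2 := IH (fun t => step k q (f t)) hD (step_mfn hD hf hA hU hI)
  (fun t ht => match hv t ht with And4 _ _ _ h => h end) B hB.
exact: (@concat_joint _ _ HX D (fun t => seg x0 (e k) (f t) (ratv q)) (fun t => path l m (step k q (f t)) (g t)) B hD h1 h2).
Qed.


Lemma vaux_last l m x z : vaux l m x z -> At (e m) /\ (e m).1 z.
Proof. by elim: l x => [|[k q] l IH] x /=; [case|case=> _ _ _ /IH]. Qed.

Lemma vaux_end l m x z z' : vaux l m x z -> (e m).1 z' -> sig m z' = sig m z ->
  vaux l m x z'.
Proof.
elim: l x => [|[k q] l IH] x /=.
  by case=> h1 h2 h3 h4 h5 h6; split => //; rewrite h6.
by case=> h1 h2 h3 h4 h5 h6; split => //; apply: IH.
Qed.

Lemma vaux_rcons l m k q x y z : vaux l m x y -> ImC (e m) (ratv q, sig m y) ->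
  vaux [::] k (psi x0 (e m) (ratv q, sig m y)) z -> vaux (rcons l (m, q)) k x z.
Proof.
elim: l x => [|[k' q'] l IH] x /=.
  case=> h1 h2 h3 h4 h5 h6; split => //; first by rewrite -h4.
  by rewrite /step -h4.
by case=> h1 h2 h3 h4 h5 h6; split => //; apply: IH.
Qed.

Lemma rat_near (v : Rn n) (eps : R) : 0 < eps -> exists q, sq (ratv q) v < eps ^+ 2.
Proof.
move=> e0.
set d := eps / (n%:R + 1).
have d0 : 0 < d by rewrite /d divr_gt0 // ltr_wpDl.
have [lo [hi hlo]] := rat_box v d0.
exists lo.
apply: (@le_lt_trans _ _ (\sum_(i < n) d ^+ 2)).
  apply: ler_sum => i _; rewrite /ratv mxE.
  have [h1 h2 _ _] := hlo i; nra.
rewrite sumr_const card_ord -[_ *+ n]mulr_natl.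
apply: small_aux => //; first by rewrite lerDr.
by rewrite ltrDl.
Qed.

Hypothesis Hcover : forall x, exists k, At (e k) /\ (e k).1 x.

Lemma reach t z : connected_component setT t z -> exists l m, vaux l m t z.
Proof.
set Reach := [set z | exists l m, vaux l m t z].
have Rt : Reach t.
  have [k [hA hk]] := Hcover t; by exists [::], k.
have oR : open Reach.
  apply: open_local => y [l [m hv]].
  have [hA hy] := vaux_last hv.
  exists [set x | (e m).1 x /\ sig m x = sig m y]; split.
  - exact: (plaque_open (HAt hA)).
  - by [].
  - move=> w [hw1 hw2]; exists l, m; exact: vaux_end hv hw1 hw2.
have oC : open (~` Reach).
  apply: open_local => z1 nz.
  have [k [hAk hk]] := Hcover z1.
  set P := [set x | (e k).1 x /\ sig k x = sig k z1].
  have oP : open P by exact: (plaque_open (HAt hAk)).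
  exists P; split => //.
  move=> y [hy1 hy2] [l [m hv]]; apply: nz.
  have [hA hym] := vaux_last hv.
  have Hc := HAt hA.
  set V := P `&` [set x | (e m).1 x /\ sig m x = sig m y].
  have oV : open V by apply: openI => //; exact: (plaque_open Hc).
  have Vy : V y by [].
  have hW := @img_open _ _ _ x0 _ Hc _ oV (sig m y).
  have hin : [set v | [set zz | ImC (e m) zz /\ V (psi x0 (e m) zz)] (v, sig m y)] ((e m).2 y).1.
    rewrite /= -surjective_pairing; split; first exact: ImC_phi.
    by rewrite (psiK x0 Hc hym).
  have [eps eps0 hball] := hW _ hin.
  have [q hq] := rat_near ((e m).2 y).1 eps0.
  have := hball (ratv q); rewrite eballE => /(_ hq) /= [hIm [[hw1 hw2] _]].
  exists (rcons l (m, q)), k; apply: vaux_rcons hv hIm _.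
  by split.
have cR : closed Reach by rewrite -[Reach]setCK closedC.
set K := connected_component setT t.
have cK : connected K by apply: component_connected.
have KR : K `&` Reach = K.
  apply: cK.
  - by exists t; split => //; apply: connected_component_refl.
  - by exists Reach.
  - by exists Reach.
move=> hz; have : (K `&` Reach) z by rewrite KR.
by case.
Qed.

End Main.

Section Final.
Variables (X : topologicalType) (measX : set (set X)) (n : nat) (x0 : X).
Hypothesis HX : sigma_algebra setT measX.
Variable At : set (chart X n).
Hypothesis HAt : forall c, At c -> MT_chart measX c.1 c.2.
Variable e : nat -> chart X n.
Hypothesis Hcover : forall x, exists k, At (e k) /\ (e k).1 x.
Variables (T T' : set X) (h : X -> X).
Hypothesis Hh : meas_holonomy measX T T' h.

Local Notation dat := (seq (nat * 'rV[rat]_n) * nat)%type.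

Definition Dk (k : nat) : set X :=
  [set t | T t /\ match @unpickle dat k with
                  | Some d => vaux x0 At e d.1 d.2 t (h t)
                  | None => False end].

Definition Pk (k : nat) : set X :=
  Dk k `&` \bigcap_j (if (j < k)%N then ~` Dk j else setT).

Lemma hT : measX T. Proof. by case: Hh => -[]. Qed.

Lemma id_mfn : mfn measX measX T id.
Proof. by move=> b hb; apply: (sI HX) => //; exact: hT. Qed.

Lemma h_mfn : mfn measX measX T h.
Proof.
move=> b hb; case: Hh => _ [hT' _] [hf _ _] hm _.
have -> : T `&` h @^-1` b = T `&` h @^-1` (b `&` T').
  apply/seteqP; split => t /=.
    by move=> [h1 h2]; split; [exact: h1|split; [exact: h2|exact: (hf t h1)]].
  by move=> [h1 [h2 _]].
have sub : b `&` T' `<=` T' by apply: subIsetr.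
by apply/(hm _ sub); apply: (sI HX).
Qed.

Lemma Dk_meas k : measX (Dk k).
Proof.
rewrite /Dk; case: (unpickle k) => [[l m]|] /=.
  exact: (vaux_meas x0 HX HAt e l m hT id_mfn h_mfn).
rewrite [X in measX X](_ : _ = set0); first exact: (s0 HX).
by apply/seteqP; split => t // [].
Qed.

Lemma Pk_meas k : measX (Pk k).
Proof.
apply: (sI HX); first exact: Dk_meas.
apply: (sbigI HX) => j; case: ifP => _; [apply: (sC HX); exact: Dk_meas|exact: (sT HX)].
Qed.

Lemma Pk_uniq k j t : Pk k t -> Pk j t -> k = j.
Proof.
move=> [hk Hk] [hj Hj].
case: (ltngtP k j) => // hkj.
  by have := Hj k I; rewrite hkj.
by have := Hk j I; rewrite hkj.
Qed.

Lemma Pk_ex t : T t -> exists k, Pk k t.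
Proof.
move=> Tt.
case: Hh => _ _ _ _ hl.
have [l [m hv]] := reach x0 HAt Hcover (hl t Tt).
have ex : exists k, `[< Dk k t >] .
  exists (pickle (l, m)); apply/asboolP; split => //; rewrite pickleK //.
case: (ex_minnP ex) => k /asboolP hk hmin.
exists k; split => // j _; case: ifP => // hjk hj.
have := hmin j (asboolT hj); rewrite leqNgt hjk //.
Qed.

Definition kk (t : X) : nat := xget 0%N [set k | Pk k t].

Definition Hom (p : X * R) : X :=
  match @unpickle dat (kk p.1) with
  | Some d => path x0 e d.1 d.2 p.1 (h p.1) p.2
  | None => p.1
  end.

Lemma kkP t : T t -> Pk (kk t) t.
Proof. by move=> Tt; exact: (@xgetPex _ 0%N [set k | Pk k t] (Pk_ex Tt)). Qed.

Lemma Hom_spec t : T t -> exists d, @unpickle dat (kk t) = Some d /\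
  vaux x0 At e d.1 d.2 t (h t) /\ forall s, Hom (t, s) = path x0 e d.1 d.2 t (h t) s.
Proof.
move=> Tt; have [[_ hD] _] := kkP Tt.
rewrite /Hom /=; move: hD; case: (unpickle (kk t)) => // d hd.
by exists d.
Qed.

Lemma Hom_meas A : measX A -> XRmeas measX ((T `*` setT) `&` Hom @^-1` A).
Proof.
move=> hA.
pose piece (k : nat) : set (X * R) :=
  match @unpickle dat k with
  | Some d => (Pk k `*` setT) `&` [set p | A (path x0 e d.1 d.2 (id p.1) (h p.1) p.2)]
  | None => set0
  end.
have -> : (T `*` setT) `&` Hom @^-1` A = \bigcup_k piece k.
  apply/seteqP; split => -[t s] /=.
    case=> -[Tt _] hH.
    exists (kk t) => //; rewrite /piece.
    have hP := kkP Tt.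
    have [d [hd [hv hs]]] := Hom_spec Tt.
    by rewrite hd; split => //; move: hH; rewrite hs.
  case=> k _; rewrite /piece; case hd: (unpickle k) => [d|] //= [[hP _] hA'].
  have Tt : T t by case: hP => -[].
  have ek := Pk_uniq (kkP Tt) hP.
  split => //; rewrite /Hom /= ek hd //.
apply: (sbigU (XRS measX)) => k; rewrite /piece.
case hd: (unpickle k) => [d|]; last exact: (s0 (XRS measX)).
have hPT : Pk k `<=` T by move=> t [[]].
have hv : forall t, Pk k t -> vaux x0 At e d.1 d.2 (id t) (h t).
  by move=> t [[_]]; rewrite hd.
exact: (path_meas HX HAt (Pk_meas k) (mfn_sub HX id_mfn (Pk_meas k) hPT)
  (mfn_sub HX h_mfn (Pk_meas k) hPT) hv hA).
Qed.

Lemma final_exists : exists H : X * R -> X,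
    [/\ meas_homotopy measX T H,
        (forall t, T t -> H (t, 0) = t) &
        (forall t, T t -> H (t, 1) = h t)].
Proof.
exists Hom; split.
- split; last exact: Hom_meas.
  move=> t Tt; have [d [_ [hv hs]]] := Hom_spec Tt.
  have -> : (fun s => Hom (t, s)) = path x0 e d.1 d.2 t (h t) by apply: funext => s; apply: hs.
  exact: (path_cont HAt hv).
- move=> t Tt; have [d [_ [hv hs]]] := Hom_spec Tt; rewrite hs; exact: (path0 HAt hv).
- move=> t Tt; have [d [_ [hv hs]]] := Hom_spec Tt; rewrite hs; exact: (path1 HAt hv).
Qed.
End Final.

Unset Implicit Arguments.

Theorem mainTheorem8 (X : topologicalType) (measX : set (set X)) (n : nat)
    (Hlam : meas_lamination measX n)
    (Hreg : exists At, regular_atlas measX (n := n) At)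
    (T T' : set X) (h : X -> X) (Hh : meas_holonomy measX T T' h) :
  exists H : X * R -> X,
    [/\ meas_homotopy measX T H,
        (forall t, T t -> H (t, 0) = t) &
        (forall t, T t -> H (t, 1) = h t)].
Proof.
case: Hlam => HX _.
case: Hreg => At [[cAt HAt hcov] _].
case: (pselect (exists x : X, True)) => [[x0 _]|nX]; last first.
  exists fst; split.
  - split; first by move=> t; exfalso; apply: nX; exists t.
    move=> A hA; rewrite [X in XRmeas measX X](_ : _ = set0); first exact: (s0 (XRS measX)).
    by apply/seteqP; split => -[t s] // _; exfalso; apply: nX; exists t.
  - by move=> t; exfalso; apply: nX; exists t.
  - by move=> t; exfalso; apply: nX; exists t.
have [f finj] := countable_injP _ cAt.
pose c0 : chart X n := (set0, fun _ => (0, 0)).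
pose e (k : nat) : chart X n :=
  match pselect (exists c, At c /\ f c = k) with
  | left H => proj1_sig (cid H)
  | right _ => c0
  end.
have Hcover : forall x, exists k, At (e k) /\ (e k).1 x.
  move=> x; have [c hc hx] := hcov x; exists (f c).
  rewrite /e; case: pselect => [H|H]; last by exfalso; apply: H; exists c.
  case: (cid H) => c' [hc' fc'] /=.
  have -> : c' = c by apply: finj; rewrite ?in_setE.
  by [].
exact: (final_exists x0 HX HAt Hcover Hh).
Qed.
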